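(* Let $I$ be a real interval centered at $0$ with $[-1,1]\subseteq I$, and let $f\colon I^n\to\mathbb{R}$ be such that $f|_{I_+^n}$ or $f|_{I_-^n}$ is nonconstant. The following are equivalent: (i) $f$ is a symmetric quasi-Lovász extension and there exists $A\subseteq[n]$ with $f_0(\mathbf{1}_A)\neq 0$; (ii) $f$ is comonotonically modular and $f_0$ is oddly homogeneous; (iii) there exists a nondecreasing odd function $\varphi_f\colon I\to\mathbb{R}$ with $\varphi_f(1)=1$ such that $f=\check{L}_{f|_{\{0,1\}^n}}\circ\varphi_f$, i.e. $f(\mathbf{x})=\check{L}_{f|_{\{0,1\}^n}}(\varphi_f(x_1),\ldots,\varphi_f(x_n))$ for all $\mathbf{x}\in I^n$.
   Context: Notation: $[n]=\{1,\ldots,n\}$; $I_+=I\cap[0,\infty[$, $I_-=I\cap\,]-\infty,0]$; $\mathbf{1}_A$ is the indicator tuple of $A\subseteq[n]$, $\mathbf{0}=\mathbf{1}_\varnothing$; for a function $g$, $g_0=g-g(\mathbf{0})$; $\mathbf{x}^+$ has components $\max(x_i,0)$, $\mathbf{x}^-=(-\mathbf{x})^+$. For $\sigma$ a permutation of $[n]$, $\mathbb{R}^n_\sigma=\{\mathbf{x}: x_{\sigma(1)}\leq\cdots\leq x_{\sigma(n)}\}$, $A^\uparrow_\sigma(i)=\{\sigma(i),\ldots,\sigma(n)\}$, $A^\uparrow_\sigma(n+1)=\varnothing$. The Lovász extension $L_\psi\colon\mathbb{R}^n\to\mathbb{R}$ of $\psi\colon\{0,1\}^n\to\mathbb{R}$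 is the function whose restriction to each $\mathbb{R}^n_\sigma$ is the unique affine function agreeing with $\psi$ at the points $\mathbf{1}_{A^\uparrow_\sigma(k)}$, $k\in[n+1]$. The symmetric Lovász extension of $\psi$ is $\check{L}_\psi(\mathbf{x})=\psi(\mathbf{0})+L_\psi(\mathbf{x}^+)-L_\psi(\mathbf{x}^-)$; a symmetric Lovász extension is any $\check{L}_\psi$. A symmetric quasi-Lovász extension is $f(\mathbf{x})=\check{L}(\varphi(x_1),\ldots,\varphi(x_n))$ with $\check{L}$ a symmetric Lovász extension and $\varphi\colon I\to\mathbb{R}$ nondecreasing and odd. Comonotonic: $\mathbf{x},\mathbf{x}'\in I^n\cap\mathbb{R}^n_\sigma$ for some $\sigma$. Comonotonically modular: $f(\mathbf{x})+f(\mathbf{x}')=f(\mathbf{x}\wedge\mathbf{x}')+f(\mathbf{x}\vee\mathbf{x}')$ for all comonotonic $\mathbf{x},\mathbf{x}'$ ($\wedge,\vee$ componentwise). A function $g\colon I^n\to\mathbb{R}$ is oddly homogeneous if there exists a nondecreasing odd $\phi\colon I\to\mathbb{R}$ with $g(x\mathbf{1}_A)=\phi(x)g(\mathbf{1}_A)$ for all $x\in I$, $A\subseteq[n]$. *)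

(* Defs.v *)
From HB Require Import structures.
From mathcomp Require Import all_boot all_order all_algebra all_fingroup.
Set Implicit Arguments. Unset Strict Implicit. Unset Printing Implicit Defensive.
Import Order.TTheory GRing.Theory Num.Theory.
Local Open Scope ring_scope.

Section Defs.
Variables (R : realFieldType) (n : nat).
Notation vec := ('I_n -> R).

Definition ind (A : {set 'I_n}) : vec := fun i => if i \in A then 1 else 0.
Definition zerov : vec := fun _ => 0.

Definition vpos (x : vec) : vec := fun i => Num.max (x i) 0.
Definition vneg (x : vec) : vec := vpos (fun i => - x i).

Definition vmin (x y : vec) : vec := fun i => Num.min (x i) (y i).
Definition vmax (x y : vec) : vec := fun i => Num.max (x i) (y i).

Definition shift0 (g : vec -> R) : vec -> R := fun x => g x - g zerov.

(* x \in R^n_sigma : x_{sigma 0} <= ... <= x_{sigma (n-1)}  (0-indexed) *)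
Definition in_sigma (s : {perm 'I_n}) (x : vec) : bool :=
  [forall i : 'I_n, forall j : 'I_n, (i <= j)%N ==> (x (s i) <= x (s j))].

Definition Aup (s : {perm 'I_n}) (k : nat) : {set 'I_n} :=
  [set s j | j in [set j : 'I_n | (k <= j)%N]].

(* Lovasz extension of psi (psi is only evaluated at 0/1-vectors 1_A).
   On R^n_sigma it is the affine function
     psi(0) + sum_i x_{sigma i} (psi(1_{A^up(i)}) - psi(1_{A^up(i+1)})),
   which is the unique affine function agreeing with psi at the points
   1_{A^up_sigma(k)}, k = 0..n. *)
Definition lovasz (psi : vec -> R) (x : vec) : R :=
  match [pick s : {perm 'I_n} | in_sigma s x] with
  | Some s => psi zerov +
      \sum_(i < n) x (s i) * (psi (ind (Aup s i)) - psi (ind (Aup s i.+1)))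
  | None => 0
  end.

Definition sym_lovasz (psi : vec -> R) (x : vec) : R :=
  psi zerov + lovasz psi (vpos x) - lovasz psi (vneg x).

Definition in_In (I : R -> Prop) (x : vec) : Prop := forall i, I (x i).

Definition is_interval (I : R -> Prop) : Prop :=
  forall x y z, I x -> I z -> x <= y -> y <= z -> I y.
Definition centered0 (I : R -> Prop) : Prop := forall x, I x -> I (- x).
Definition contains_m11 (I : R -> Prop) : Prop :=
  forall x, -1 <= x -> x <= 1 -> I x.

Definition nondecr_on (I : R -> Prop) (phi : R -> R) : Prop :=
  forall x y, I x -> I y -> x <= y -> phi x <= phi y.
Definition odd_on (I : R -> Prop) (phi : R -> R) : Prop :=
  forall x, I x -> phi (- x) = - phi x.

Definition sym_quasi_lovasz (I : R -> Prop) (f : vec -> R) : Prop :=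
  exists (psi : vec -> R) (phi : R -> R),
    nondecr_on I phi /\ odd_on I phi /\
    forall x, in_In I x -> f x = sym_lovasz psi (fun i => phi (x i)).

Definition comono_modular (I : R -> Prop) (f : vec -> R) : Prop :=
  forall (s : {perm 'I_n}) (x y : vec), in_In I x -> in_In I y ->
    in_sigma s x -> in_sigma s y ->
    f x + f y = f (vmin x y) + f (vmax x y).

Definition oddly_homogeneous (I : R -> Prop) (g : vec -> R) : Prop :=
  exists phi : R -> R, nondecr_on I phi /\ odd_on I phi /\
    forall (x : R) (A : {set 'I_n}), I x ->
      g (fun i => x * ind A i) = phi x * g (ind A).

Definition nonconst_on (S : R -> Prop) (f : vec -> R) : Prop :=
  exists x y, in_In S x /\ in_In S y /\ f x <> f y.

End Defs.

(* Main.v *)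
Require Import Defs.
From HB Require Import structures.
From mathcomp Require Import all_boot all_order all_algebra all_fingroup.
From Stdlib Require Import FunctionalExtensionality Classical.
Set Implicit Arguments. Unset Strict Implicit. Unset Printing Implicit Defensive.
Import Order.TTheory GRing.Theory Num.Theory.
Local Open Scope ring_scope.

Definition Ls (R : realFieldType) n (s : {perm 'I_n}) (psi : ('I_n -> R) -> R)
  (x : 'I_n -> R) : R :=
  psi (@zerov R n) +
  \sum_(i < n) x (s i) * (psi (ind R (Aup s i)) - psi (ind R (Aup s i.+1))).

Lemma sort_exists (R : realFieldType) n (x : 'I_n -> R) :
  exists s : {perm 'I_n}, in_sigma s x.
Proof.
pose le := fun i j : 'I_n => x i <= x j.
pose l := sort le (enum 'I_n).
have Hsz : size l = n by rewrite size_sort size_enum_ord.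
have Hp : perm_eq l (enum 'I_n) by rewrite perm_sort.
have Hu : uniq l by rewrite (perm_uniq Hp) enum_uniq.
pose g := fun k : 'I_n => nth k l k.
have ginj : injective g.
  move=> i j; rewrite /g (set_nth_default i j) ?Hsz // => /eqP.
  by rewrite nth_uniq ?Hsz // => /eqP /val_inj.
exists (perm ginj).
apply/forallP=> i; apply/forallP=> j; apply/implyP=> hij.
rewrite !permE /g (set_nth_default i j) ?Hsz //.
have Hs : sorted le l by apply: sort_sorted => a b; exact: le_total.
have tr : transitive le by move=> a b c; exact: le_trans.
have rf : reflexive le by move=> a; exact: lexx.
have := sorted_leq_nth tr rf j Hs; rewrite /prop_in2 /= => H.
rewrite [nth i l i](set_nth_default j) ?[nth i l j](set_nth_default j) ?Hsz //.
by apply: H; rewrite ?inE ?Hsz.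
Qed.

Lemma mem_Aup n (s : {perm 'I_n}) (j : 'I_n) k :
  (s j \in Aup s k) = (k <= j)%N.
Proof. by rewrite /Aup mem_imset ?inE //; exact: perm_inj. Qed.

Lemma nth_mapE (R : realFieldType) n (g : 'I_n -> R) (i : 'I_n) :
  nth 0 [seq g j | j <- enum 'I_n] i = g i.
Proof. by rewrite (nth_map i) ?size_enum_ord ?nth_ord_enum. Qed.

Lemma dsum (R : comRingType) (v : nat -> R) m :
  \sum_(0 <= k < m.+1) (v k - (if k is k'.+1 then v k' else 0)) = v m.
Proof.
elim: m => [|m IH]; first by rewrite big_nat1 subr0.
by rewrite big_nat_recr //= IH addrC subrK.
Qed.

Lemma abel (R : comRingType) (v a : nat -> R) m :
  \sum_(0 <= k < m) v k * (a k - a k.+1) =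
  \sum_(0 <= k < m) (v k - (if k is k'.+1 then v k' else 0)) * (a k - a m).
Proof.
elim: m => [|m IH]; first by rewrite !big_geq.
rewrite big_nat_recr //= IH big_nat_recr //=.
have -> : \sum_(0 <= k < m) (v k - (if k is k'.+1 then v k' else 0)) * (a k - a m.+1)
  = \sum_(0 <= k < m) (v k - (if k is k'.+1 then v k' else 0)) * (a k - a m)
    + (\sum_(0 <= k < m) (v k - (if k is k'.+1 then v k' else 0))) * (a m - a m.+1).
  rewrite big_distrl -big_split /=; apply: eq_bigr => k _.
  by rewrite -mulrDr addrA subrK.
rewrite -addrA; congr (_ + _).
by rewrite -mulrDl -(big_nat_recr _ _ _ (leq0n m)) dsum.
Qed.

Lemma sigmaP (R : realFieldType) n (s : {perm 'I_n}) (x : 'I_n -> R) :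
  in_sigma s x -> forall i j : 'I_n, (i <= j)%N -> x (s i) <= x (s j).
Proof. by move=> /forallP H i j hij; have /forallP/(_ j)/implyP := H i; apply. Qed.

Lemma sigma_intro (R : realFieldType) n (s : {perm 'I_n}) (x : 'I_n -> R) :
  (forall i j : 'I_n, (i <= j)%N -> x (s i) <= x (s j)) -> in_sigma s x.
Proof. by move=> H; apply/forallP=> i; apply/forallP=> j; apply/implyP; apply: H. Qed.

Lemma sorted_vals (R : realFieldType) n (s t : {perm 'I_n}) (x : 'I_n -> R) :
  in_sigma s x -> in_sigma t x -> forall i, x (s i) = x (t i).
Proof.
move=> Hs Ht.
have srt : forall u : {perm 'I_n}, in_sigma u x ->
    sorted <=%R [seq x (u i) | i <- enum 'I_n].
  move=> u Hu; apply/(sortedP 0) => k; rewrite size_map size_enum_ord => hk.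
  have := nth_mapE (fun i => x (u i)) (Ordinal (ltnW hk)).
  have := nth_mapE (fun i => x (u i)) (Ordinal hk).
  rewrite /= => -> ->; exact: (sigmaP Hu).
have pe : forall u : {perm 'I_n}, perm_eq [seq u i | i <- enum 'I_n] (enum 'I_n).
  move=> u; apply: uniq_perm;
    [rewrite map_inj_uniq ?enum_uniq //; exact: perm_inj | exact: enum_uniq |].
  move=> i; rewrite mem_enum; apply/mapP; exists (u^-1 i)%g; first by rewrite mem_enum.
  by rewrite permKV.
have E : forall u : {perm 'I_n}, [seq x (u i) | i <- enum 'I_n] =
   [seq x i | i <- [seq u i | i <- enum 'I_n]].
  by move=> u; elim: (enum 'I_n) => //= a l ->.
have eq : [seq x (s i) | i <- enum 'I_n] = [seq x (t i) | i <- enum 'I_n].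
  apply: le_sorted_eq; [exact: srt|exact: srt|].
  rewrite !E; apply: perm_map; apply: perm_trans (pe s) _; rewrite perm_sym; exact: pe.
move=> i; by rewrite -(nth_mapE (fun i => x (s i))) eq nth_mapE.
Qed.

Lemma Aup_n n (s : {perm 'I_n}) : Aup s n = set0.
Proof.
apply/setP=> i; rewrite inE -(permKV s i) mem_Aup.
by rewrite leqNgt ltn_ord.
Qed.

Lemma Aup_level (R : realFieldType) n (s : {perm 'I_n}) (x : 'I_n -> R) k
  (hk : (k < n)%N) : in_sigma s x ->
  (k = 0%N \/ exists k', k = k'.+1 /\
      nth 0 [seq x (s i) | i <- enum 'I_n] k' < nth 0 [seq x (s i) | i <- enum 'I_n] k) ->
  Aup s k = [set i | nth 0 [seq x (s i) | i <- enum 'I_n] k <= x i].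
Proof.
move=> Hs Hk; apply/setP => i; rewrite inE -{1}(permKV s i) mem_Aup.
set j := (s^-1 i)%g.
have -> : x i = x (s j) by rewrite /j permKV.
have -> : nth 0 [seq x (s i) | i <- enum 'I_n] k = x (s (Ordinal hk))
  by exact: (nth_mapE (fun i => x (s i)) (Ordinal hk)).
case: (leqP k j) => h; first by rewrite (sigmaP Hs) //.
case: Hk => [E|[k' [E Hlt]]]; first by rewrite E in h.
have hk' : (k' < n)%N by rewrite (ltn_trans _ hk) // E.
have e1 : nth 0 [seq x (s i) | i <- enum 'I_n] k' = x (s (Ordinal hk'))
  by exact: (nth_mapE (fun i => x (s i)) (Ordinal hk')).
have e2 : nth 0 [seq x (s i) | i <- enum 'I_n] k = x (s (Ordinal hk))
  by exact: (nth_mapE (fun i => x (s i)) (Ordinal hk)).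
move: Hlt; rewrite e1 e2 => Hlt.
apply/esym/negbTE; rewrite -ltNge; apply: le_lt_trans Hlt.
by apply: (sigmaP Hs); rewrite /= -ltnS -E.
Qed.

Lemma Ls_indep (R : realFieldType) n (s t : {perm 'I_n}) (psi : ('I_n -> R) -> R)
  (x : 'I_n -> R) : in_sigma s x -> in_sigma t x -> Ls s psi x = Ls t psi x.
Proof.
move=> Hs Ht; rewrite /Ls; congr (_ + _).
pose v := nth 0 [seq x (s i) | i <- enum 'I_n].
have vt : v = nth 0 [seq x (t i) | i <- enum 'I_n].
  by congr nth; apply: eq_map => i; exact: sorted_vals Hs Ht i.
have conv : forall u : {perm 'I_n}, in_sigma u x ->
   \sum_(i < n) x (u i) * (psi (ind R (Aup u i)) - psi (ind R (Aup u i.+1))) =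
   \sum_(0 <= k < n) v k * (psi (ind R (Aup u k)) - psi (ind R (Aup u k.+1))).
  move=> u Hu; rewrite big_mkord; apply: eq_bigr => i _.
  by rewrite /v nth_mapE (sorted_vals Hs Hu i).
rewrite (conv s Hs) (conv t Ht) !abel !Aup_n.
apply: eq_big_nat => k /andP [_ hk].
set d := (v k - _).
have [->|dn0] := eqVneq d 0; first by rewrite !mul0r.
have lev : k = 0%N \/ exists k', k = k'.+1 /\
      nth 0 [seq x (s i) | i <- enum 'I_n] k' < nth 0 [seq x (s i) | i <- enum 'I_n] k.
  move: dn0; rewrite /d; clear d; case: k hk => [|k'] hk dn0; first by left.
  right; exists k'; split => //; rewrite lt_neqAle; apply/andP; split.
    by rewrite eq_sym -subr_eq0.
  have e1 : nth 0 [seq x (s i) | i <- enum 'I_n] k' = x (s (Ordinal (ltnW hk)))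
    by exact: (nth_mapE (fun i => x (s i)) (Ordinal (ltnW hk))).
  have e2 : nth 0 [seq x (s i) | i <- enum 'I_n] k'.+1 = x (s (Ordinal hk))
    by exact: (nth_mapE (fun i => x (s i)) (Ordinal hk)).
  by rewrite e1 e2; exact: (@sigmaP _ _ _ _ Hs (Ordinal (ltnW hk)) (Ordinal hk) (leqnSn k')).
have lev' : k = 0%N \/ exists k', k = k'.+1 /\
      nth 0 [seq x (t i) | i <- enum 'I_n] k' < nth 0 [seq x (t i) | i <- enum 'I_n] k.
  by rewrite -vt.
rewrite (Aup_level hk Hs lev) (Aup_level hk Ht lev') -vt.
done.
Qed.

Lemma lovasz_L (R : realFieldType) n (s : {perm 'I_n}) (psi : ('I_n -> R) -> R)
  (x : 'I_n -> R) : in_sigma s x -> lovasz psi x = Ls s psi x.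
Proof.
move=> Hs; rewrite /lovasz; case: pickP => [t Ht|H]; last by rewrite H in Hs.
exact: Ls_indep.
Qed.

Lemma Ls_add (R : realFieldType) n (s : {perm 'I_n}) psi (a b c d : 'I_n -> R) :
  (forall i, a i + b i = c i + d i) ->
  Ls s psi a + Ls s psi b = Ls s psi c + Ls s psi d.
Proof.
move=> H; rewrite /Ls addrACA [RHS]addrACA; congr (_ + _).
rewrite -!big_split; apply: eq_bigr => i _ /=; by rewrite -!mulrDl H.
Qed.

Lemma Ls_scale (R : realFieldType) n (s : {perm 'I_n}) psi (z : 'I_n -> R) t :
  Ls s psi (fun i => t * z i) = psi (@zerov R n) + t * (Ls s psi z - psi (@zerov R n)).
Proof.
rewrite /Ls; congr (_ + _); rewrite [X in _ * X]addrC addKr big_distrr.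
apply: eq_bigr => i _ /=.
by rewrite mulrA.
Qed.

Lemma sigma_scale (R : realFieldType) n (s : {perm 'I_n}) (z : 'I_n -> R) t :
  0 <= t -> in_sigma s z -> in_sigma s (fun i => t * z i).
Proof.
move=> ht Hz; apply: sigma_intro => i j hij; apply: ler_wpM2l => //.
exact: sigmaP Hz _ _ hij.
Qed.

Lemma lovasz_zero (R : realFieldType) n psi : lovasz psi (@zerov R n) = psi (@zerov R n).
Proof.
have [s _] := sort_exists (@zerov R n).
rewrite (@lovasz_L _ _ s); last by apply: sigma_intro.
by rewrite /Ls big1 ?addr0 // => i _; rewrite /zerov mul0r.
Qed.

Lemma lovasz_scale (R : realFieldType) n psi (z : 'I_n -> R) t : 0 <= t ->
  lovasz psi (fun i => t * z i) = psi (@zerov R n) + t * (lovasz psi z - psi (@zerov R n)).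
Proof.
move=> ht; have [s Hs] := sort_exists z.
by rewrite (lovasz_L _ Hs) (lovasz_L _ (sigma_scale ht Hs)) Ls_scale.
Qed.

Lemma sym_hom (R : realFieldType) n psi (z : 'I_n -> R) t : (forall i, 0 <= z i) ->
  sym_lovasz psi (fun i => t * z i) = psi (@zerov R n) + t * (lovasz psi z - psi (@zerov R n)).
Proof.
move=> Hz; rewrite /sym_lovasz.
case: (lerP 0 t) => ht.
  have -> : vpos (fun i => t * z i) = (fun i => t * z i).
    by apply: functional_extensionality => i; rewrite /vpos max_l // mulr_ge0.
  have -> : vneg (fun i => t * z i) = @zerov R n.
    apply: functional_extensionality => i; rewrite /vneg /vpos /zerov max_r //.
    by rewrite oppr_le0 mulr_ge0.
  by rewrite lovasz_zero lovasz_scale // [_ + (_ + _)]addrC addrK.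
have -> : vpos (fun i => t * z i) = @zerov R n.
  apply: functional_extensionality => i; rewrite /vpos /zerov max_r //.
  by rewrite -oppr_ge0 -mulNr mulr_ge0 // oppr_ge0 ltW.
have -> : vneg (fun i => t * z i) = (fun i => - t * z i).
  apply: functional_extensionality => i; rewrite /vneg /vpos max_l ?mulNr //.
  by rewrite -mulNr mulr_ge0 // oppr_ge0 ltW.
rewrite lovasz_zero lovasz_scale ?oppr_ge0 ?ltW //.
by rewrite opprD addrA addrK mulNr opprK.
Qed.

Lemma alg4 (V : zmodType) (p a b c d e f g h : V) :
  a + c = e + g -> b + d = f + h ->
  p + a - b + (p + c - d) = p + e - f + (p + g - h).
Proof.
move=> H1 H2.
rewrite [LHS]addrACA [RHS]addrACA -!opprD [p + a + _]addrACA [p + e + _]addrACA.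
by rewrite H1 H2.
Qed.

Lemma sym_comono (R : realFieldType) n (I : R -> Prop) psi (phi : R -> R)
  (s : {perm 'I_n}) (x y : 'I_n -> R) :
  nondecr_on I phi -> in_In I x -> in_In I y -> in_sigma s x -> in_sigma s y ->
  sym_lovasz psi (fun i => phi (x i)) + sym_lovasz psi (fun i => phi (y i)) =
  sym_lovasz psi (fun i => phi (vmin x y i)) + sym_lovasz psi (fun i => phi (vmax x y i)).
Proof.
move=> Hphi Ix Iy Sx Sy.
have rinj : injective (fun i : 'I_n => s (rev_ord i)).
  exact: (inj_comp (@perm_inj _ s) (@rev_ord_inj n)).
pose rs := perm rinj.
have sig : forall z, in_In I z -> in_sigma s z ->
    in_sigma s (vpos (fun i => phi (z i))) /\ in_sigma rs (vneg (fun i => phi (z i))).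
  move=> z Iz Sz; split; apply: sigma_intro => i j hij.
    rewrite /vpos; apply: le_max2 => //; apply: Hphi => //; exact: sigmaP Sz _ _ hij.
  rewrite /vneg /vpos !permE /=; apply: le_max2 => //; rewrite lerN2.
  apply: Hphi => //; apply: (sigmaP Sz) => /=.
  by apply: leq_sub2l.
have Imin : in_In I (vmin x y).
  by move=> i; rewrite /vmin; case: (lerP (x i) (y i)).
have Imax : in_In I (vmax x y).
  by move=> i; rewrite /vmax; case: (lerP (x i) (y i)).
have Smin : in_sigma s (vmin x y).
  apply: sigma_intro => i j hij; apply: le_min2; [exact: sigmaP Sx _ _ hij|exact: sigmaP Sy _ _ hij].
have Smax : in_sigma s (vmax x y).
  apply: sigma_intro => i j hij; apply: le_max2; [exact: sigmaP Sx _ _ hij|exact: sigmaP Sy _ _ hij].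
have [Px Nx] := sig x Ix Sx.
have [Py Ny] := sig y Iy Sy.
have [Pmin Nmin] := sig _ Imin Smin.
have [Pmax Nmax] := sig _ Imax Smax.
rewrite /sym_lovasz !(lovasz_L _ Px, lovasz_L _ Nx, lovasz_L _ Py, lovasz_L _ Ny,
  lovasz_L _ Pmin, lovasz_L _ Nmin, lovasz_L _ Pmax, lovasz_L _ Nmax).
apply: alg4; apply: Ls_add => i; rewrite /vpos /vneg /vpos /vmin /vmax;
  case: (lerP (x i) (y i)) => // _; exact: addrC.
Qed.

Lemma decomp (R : realFieldType) n (I : R -> Prop) (h : ('I_n -> R) -> R)
  (s : {perm 'I_n}) (u : 'I_n -> R) :
  comono_modular I h -> I 0 -> in_In I u -> (forall i, 0 <= u i) -> in_sigma s u ->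
  h u = h (@zerov R n) + \sum_(k < n)
     (h (fun i => u (s k) * ind R (Aup s k) i) - h (fun i => u (s k) * ind R (Aup s k.+1) i)).
Proof.
move=> Hmod I0 Iu u0 Su.
pose p i := nat_of_ord ((s^-1)%g i).
have ps : forall i, p (s i) = i by move=> i; rewrite /p permK.
have indE : forall k i, ind R (Aup s k) i = if (k <= p i)%N then 1 else 0.
  by move=> k i; rewrite /ind -{1}(permKV s i) mem_Aup.
have mono : forall i j, (p i <= p j)%N -> u i <= u j.
  move=> i j hij; rewrite -(permKV s i) -(permKV s j); exact: (sigmaP Su).
pose v := nth 0 [seq u (s i) | i <- enum 'I_n].
pose tr m := fun i => if (m <= p i)%N then u i else 0.
pose T k := h (fun i => v k * ind R (Aup s k) i) - h (fun i => v k * ind R (Aup s k.+1) i).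
have claim : forall m, (m <= n)%N -> h u = h (tr m) + \sum_(0 <= k < m) T k.
  elim => [_|m IH hm].
    by rewrite big_geq // addr0.
  rewrite big_nat_recr //= (IH (ltnW hm)) addrA [RHS]addrAC; congr (_ + _).
  pose m0 := Ordinal hm.
  have vm : v m = u (s m0) by exact: (nth_mapE (fun i => u (s i)) m0).
  set a := u (s m0).
  have a0 : 0 <= a := u0 _.
  pose w := fun i => a * ind R (Aup s m) i.
  have Iw : in_In I w by move=> i; rewrite /w indE; case: ifP => _; rewrite ?mulr1 ?mulr0 //; exact: Iu.
  have Itr : in_In I (tr m.+1) by move=> i; rewrite /tr; case: ifP.
  have Sw : in_sigma s w.
    apply: sigma_intro => i j hij; rewrite /w !indE !ps; apply: ler_wpM2l => //.
    case: ifP => hi; case: ifP => hj //.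
    by rewrite (leq_trans hi hij) in hj.
  have Str : in_sigma s (tr m.+1).
    apply: sigma_intro => i j hij; rewrite /tr !ps.
    case: ifP => hi; case: ifP => hj //.
    - by apply: mono; rewrite !ps.
    - by rewrite (leq_trans hi hij) in hj.
  have Hc := Hmod s (tr m.+1) w Itr Iw Str Sw.
  have Emin : vmin (tr m.+1) w = (fun i => v m * ind R (Aup s m.+1) i).
    apply: functional_extensionality => i; rewrite /vmin /tr /w vm !indE.
    case: (ltngtP (p i) m) => hpi.
    - by rewrite !mulr0 min_l.
    - rewrite !mulr1 min_r //.
      apply: mono; by rewrite ps ltnW.
    - by rewrite mulr1 mulr0 min_l.
  have Emax : vmax (tr m.+1) w = tr m.
    apply: functional_extensionality => i; rewrite /vmax /tr /w !indE.
    case: (ltngtP (p i) m) => hpi.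
    - by rewrite !mulr0 max_l.
    - rewrite !mulr1 max_l //.
      apply: mono; by rewrite ps ltnW.
    - rewrite mulr1 max_r //.
      have -> : i = s m0 by rewrite -(permKV s i); congr (s _); apply: val_inj.
      done.
  rewrite /T -Emax -Emin.
  have -> : (fun i => v m * ind R (Aup s m) i) = w by rewrite vm.
  by rewrite addrA Hc [h (vmin _ _) + _]addrC addrK.
rewrite (claim n (leqnn n)); congr (_ + _).
  congr h; apply: functional_extensionality => i; rewrite /tr /zerov.
  by rewrite leqNgt ltn_ord.
rewrite big_mkord; apply: eq_bigr => k _; rewrite /T.
have -> : v k = u (s k) by exact: (nth_mapE (fun i => u (s i)) k).
done.
Qed.

Lemma phi0 (R : realFieldType) (I : R -> Prop) phi : odd_on I phi -> I 0 -> phi 0 = 0.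
Proof.
move=> H I0; have E := H 0 I0; rewrite oppr0 in E.
have : phi 0 *+ 2 == 0 by rewrite mulr2n {1}E addNr.
by rewrite mulrn_eq0 /= => /eqP.
Qed.

Lemma in_In_min (R : realFieldType) n (I : R -> Prop) (x y : 'I_n -> R) :
  in_In I x -> in_In I y -> in_In I (vmin x y).
Proof. by move=> Ix Iy i; rewrite /vmin; case: (lerP (x i) (y i)). Qed.

Lemma in_In_max (R : realFieldType) n (I : R -> Prop) (x y : 'I_n -> R) :
  in_In I x -> in_In I y -> in_In I (vmax x y).
Proof. by move=> Ix Iy i; rewrite /vmax; case: (lerP (x i) (y i)). Qed.

Lemma sym_const (R : realFieldType) n (psi : ('I_n -> R) -> R) z :
  (forall B, psi (ind R B) = psi (@zerov R n)) -> sym_lovasz psi z = psi (@zerov R n).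
Proof.
move=> H.
have L0 : forall w, lovasz psi w = psi (@zerov R n).
  move=> w; have [s Hs] := sort_exists w; rewrite (lovasz_L _ Hs) /Ls.
  by rewrite big1 ?addr0 // => i _; rewrite !H subrr mulr0.
by rewrite /sym_lovasz !L0 addrK.
Qed.

Lemma rev_perm n (s : {perm 'I_n}) : exists rs : {perm 'I_n},
  forall (R : realFieldType) (x : 'I_n -> R), in_sigma s x -> in_sigma rs (fun i => - x i).
Proof.
have rinj : injective (fun i : 'I_n => s (rev_ord i)).
  exact: (inj_comp (@perm_inj _ s) (@rev_ord_inj n)).
exists (perm rinj) => R x Sx; apply: sigma_intro => i j hij.
rewrite !permE /= lerN2; apply: (sigmaP Sx) => /=; exact: leq_sub2l.
Qed.

Lemma decomp_hom (R : realFieldType) n (I : R -> Prop) (h : ('I_n -> R) -> R)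
  (chi : R -> R) (c : {set 'I_n} -> R) (s : {perm 'I_n}) (u : 'I_n -> R) :
  comono_modular I h -> I 0 -> in_In I u -> (forall i, 0 <= u i) -> in_sigma s u ->
  (forall t B, I t -> h (fun i => t * ind R B i) = h (@zerov R n) + chi t * c B) ->
  h u = h (@zerov R n) + \sum_(k < n) chi (u (s k)) * (c (Aup s k) - c (Aup s k.+1)).
Proof.
move=> Hm I0 Iu u0 Su Hh; rewrite (decomp Hm I0 Iu u0 Su); congr (_ + _).
apply: eq_bigr => k _; rewrite !Hh //.
by rewrite [h _ + _]addrC addrKA mulrBr.
Qed.

Lemma alg3 (V : zmodType) (a p m : V) : a + p + (a - m) - a = a + (a + p) - (a + m).
Proof. by rewrite [a + (a + p)]addrC addrKA addrC addrA addKr addrA [p + a]addrC. Qed.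

Section Main.
Variables (R : realFieldType) (n : nat) (I : R -> Prop) (f : ('I_n -> R) -> R).
Hypotheses (HI : is_interval I) (HIc : centered0 I) (HI1 : contains_m11 I).
Hypothesis (Hne : exists x y, in_In I x /\ in_In I y /\ f x <> f y).

Let I0 : I 0. Proof. by apply: HI1; rewrite ?oppr_le0 ?ler01. Qed.
Let I1 : I 1. Proof. by apply: HI1; rewrite ?lexx // (le_trans _ (@ler01 R)) // oppr_le0 ler01. Qed.

Lemma ind_ge0 (B : {set 'I_n}) i : 0 <= ind R B i.
Proof. by rewrite /ind; case: ifP; rewrite ?ler01 ?lexx. Qed.

Lemma in_In_ind t (B : {set 'I_n}) : I t -> in_In I (fun i => t * ind R B i).
Proof. by move=> It i; rewrite /ind; case: ifP; rewrite ?mulr1 ?mulr0. Qed.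

Lemma one_ind (B : {set 'I_n}) : (fun i => 1 * ind R B i) = ind R B.
Proof. by apply: functional_extensionality => i; rewrite mul1r. Qed.

Lemma I2 : (sym_quasi_lovasz I f /\ exists A : {set 'I_n}, shift0 f (ind R A) <> 0) ->
  comono_modular I f /\ oddly_homogeneous I (shift0 f).
Proof.
move=> [[psi [phi [Hnd [Hod Hf]]]] [A0 HA0]].
have p0 := phi0 Hod I0.
split.
  move=> s x y Ix Iy Sx Sy.
  rewrite !Hf //; [|exact: in_In_max|exact: in_In_min].
  exact: (@sym_comono _ _ I psi phi s x y Hnd Ix Iy Sx Sy).
have key : forall t B, I t -> f (fun i => t * ind R B i) =
    psi (@zerov R n) + phi t * (lovasz psi (ind R B) - psi (@zerov R n)).
  move=> t B It; rewrite Hf; last exact: in_In_ind.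
  have -> : (fun i => phi (t * ind R B i)) = (fun i => phi t * ind R B i).
    apply: functional_extensionality => i; rewrite /ind.
    by case: ifP; rewrite ?mulr1 ?mulr0 ?p0.
  by apply: sym_hom => i; exact: ind_ge0.
have fz : f (@zerov R n) = psi (@zerov R n).
  have -> : f (@zerov R n) = f (fun i => 0 * ind R set0 i).
    by congr f; apply: functional_extensionality => i; rewrite mul0r.
  by rewrite (key _ _ I0) p0 mul0r addr0.
have sh : forall t B, I t -> shift0 f (fun i => t * ind R B i) =
    phi t * (lovasz psi (ind R B) - psi (@zerov R n)).
  by move=> t B It; rewrite /shift0 key // fz addrC addKr.
have sh1 : forall B, shift0 f (ind R B) = phi 1 * (lovasz psi (ind R B) - psi (@zerov R n)).
  by move=> B; rewrite -sh // one_ind.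
have phi1 : phi 1 != 0.
  by apply: contra_notN HA0 => /eqP; rewrite sh1 => ->; rewrite mul0r.
have phi1p : 0 < phi 1.
  rewrite lt_neqAle eq_sym phi1 -p0; apply: Hnd => //; exact: ler01.
exists (fun t => phi t / phi 1); split; [|split].
- by move=> a b Ia Ib hab; rewrite ler_pM2r ?invr_gt0 //; apply: Hnd.
- by move=> a Ia; rewrite Hod // mulNr.
- by move=> t B It; rewrite sh // sh1 mulrA divfK.
Qed.

Lemma rep (phi : R -> R) : comono_modular I f -> nondecr_on I phi -> odd_on I phi ->
  (forall (t : R) (A : {set 'I_n}), I t ->
      shift0 f (fun i => t * ind R A i) = phi t * shift0 f (ind R A)) ->
  forall x, in_In I x -> f x = sym_lovasz f (fun i => phi (x i)).
Proof.
move=> Hm Hnd Hod Hh x Ix.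
have p0 := phi0 Hod I0.
set f0 := f (@zerov R n).
pose c B := f (ind R B) - f0.
have Hf : forall t B, I t -> f (fun i => t * ind R B i) = f0 + phi t * c B.
  by move=> t B It; rewrite -Hh // /shift0 addrC subrK.
pose g := fun z : 'I_n -> R => f (fun i => - z i).
have Iz : in_In I (@zerov R n) by move=> i.
have Szero : forall s : {perm 'I_n}, in_sigma s (@zerov R n).
  by move=> s; apply: sigma_intro.
have gz : g (@zerov R n) = f0.
  by rewrite /g; congr f; apply: functional_extensionality => i; rewrite /zerov oppr0.
have Hg : forall t B, I t -> g (fun i => t * ind R B i) = g (@zerov R n) + (- phi t) * c B.
  move=> t B It; rewrite gz /g.
  have -> : (fun i => - (t * ind R B i)) = (fun i => (- t) * ind R B i).
    by apply: functional_extensionality => i; rewrite mulNr.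
  by rewrite Hf; [rewrite Hod | exact: HIc].
have gm : comono_modular I g.
  move=> s a b Ia Ib Sa Sb; have [rs Hrs] := rev_perm s.
  rewrite /g (Hm rs (fun i => - a i) (fun i => - b i)) ?Hrs //; last first.
    by move=> i; apply: HIc.
    by move=> i; apply: HIc.
  rewrite addrC; congr (f _ + f _); apply: functional_extensionality => i;
    rewrite /vmin /vmax; case: (lerP (a i) (b i)) => hab.
  - by rewrite max_l // lerN2.
  - by rewrite max_r // lerN2 ltW.
  - by rewrite min_r // lerN2.
  - by rewrite min_l // lerN2 ltW.
have [s Sx] := sort_exists x.
have E0 := Hm s x (@zerov R n) Ix Iz Sx (Szero s).
have Emax : vmax x (@zerov R n) = vpos x by [].
have Emin : vmin x (@zerov R n) = (fun i => - vneg x i).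
  apply: functional_extensionality => i; rewrite /vmin /vneg /vpos /zerov.
  case: (lerP (x i) 0) => hx.
  - by rewrite max_l ?opprK // oppr_ge0.
  - by rewrite max_r ?oppr0 // oppr_le0 ltW.
rewrite Emax Emin in E0.
have Ipos : in_In I (vpos x).
  by move=> i; rewrite /vpos; case: (lerP (x i) 0) => h; rewrite ?max_r ?max_l // ltW.
have Ineg : in_In I (vneg x).
  move=> i; rewrite /vneg /vpos; case: (lerP (- x i) 0) => h;
    rewrite ?max_r ?max_l ?(ltW h) //; exact: HIc.
have pos0 : forall i, 0 <= vpos x i by move=> i; rewrite /vpos le_max lexx orbT.
have neg0 : forall i, 0 <= vneg x i by move=> i; rewrite /vneg /vpos le_max lexx orbT.
have [sp Sp] := sort_exists (vpos x).
have [sn Sn] := sort_exists (vneg x).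
have phiS : forall (u : 'I_n -> R) s', in_In I u -> in_sigma s' u ->
    in_sigma s' (fun i => phi (u i)).
  move=> u s' Iu Su; apply: sigma_intro => i j hij; apply: Hnd => //.
  exact: sigmaP Su _ _ hij.
have Lrel : forall (u : 'I_n -> R) s', in_In I u -> in_sigma s' u ->
    lovasz f (fun i => phi (u i)) =
    f0 + \sum_(k < n) phi (u (s' k)) * (c (Aup s' k) - c (Aup s' k.+1)).
  move=> u s' Iu Su; rewrite (lovasz_L _ (phiS _ _ Iu Su)) /Ls; congr (_ + _).
  apply: eq_bigr => k _; congr (_ * _).
  by rewrite /c opprB addrA subrK.
have Dp := decomp_hom Hm I0 Ipos pos0 Sp Hf.
have Dn := decomp_hom gm I0 Ineg neg0 Sn Hg.
have Ep : (fun i => phi (vpos x i)) = vpos (fun i => phi (x i)).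
  apply: functional_extensionality => i; rewrite /vpos.
  case: (lerP (x i) 0) => h.
  - rewrite max_r; first exact: p0.
    by rewrite -p0; exact: (Hnd _ _ (Ix i) I0 h).
  - rewrite max_l //; rewrite -p0; exact: (Hnd _ _ I0 (Ix i) (ltW h)).
have En : (fun i => phi (vneg x i)) = vneg (fun i => phi (x i)).
  apply: functional_extensionality => i; rewrite /vneg /vpos -(Hod _ (Ix i)).
  case: (lerP (- x i) 0) => h.
  - rewrite max_r; first exact: p0.
    by rewrite -p0; exact: (Hnd _ _ (HIc (Ix i)) I0 h).
  - rewrite max_l //; rewrite -p0; exact: (Hnd _ _ I0 (HIc (Ix i)) (ltW h)).
have fx : f x = f (vpos x) + g (vneg x) - f0.
  by rewrite /g /= [f (vpos x) + _]addrC -E0 addrK.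
rewrite fx /sym_lovasz -Ep -En (Lrel _ _ Ipos Sp) (Lrel _ _ Ineg Sn) Dp Dn gz.
set P := \sum_(k < n) _.
set N := \sum_(k < n) _.
have -> : N = - \sum_(k < n) phi (vneg x (sn k)) * (c (Aup sn k) - c (Aup sn k.+1)).
  by rewrite /N -sumrN; apply: eq_bigr => k _; rewrite mulNr.
set M := \sum_(k < n) _.
exact: alg3.
Qed.

Lemma I31 : (exists phi : R -> R, nondecr_on I phi /\ odd_on I phi /\ phi 1 = 1 /\
           forall x, in_In I x -> f x = sym_lovasz f (fun i => phi (x i))) ->
  sym_quasi_lovasz I f /\ exists A : {set 'I_n}, shift0 f (ind R A) <> 0.
Proof.
case=> phi [Hnd [Hod [H1 Hr]]]; split; first by exists f, phi.
apply: NNPP => Hn.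
have Hall : forall B, f (ind R B) = f (@zerov R n).
  move=> B; apply/eqP; rewrite -subr_eq0; apply/eqP; apply: NNPP => hB.
  by apply: Hn; exists B.
case: Hne => x [y [Ix [Iy Hxy]]]; apply: Hxy.
by rewrite (Hr x Ix) (Hr y Iy) !sym_const.
Qed.

Lemma I3 : comono_modular I f /\ oddly_homogeneous I (shift0 f) ->
  exists phi : R -> R, nondecr_on I phi /\ odd_on I phi /\ phi 1 = 1 /\
           forall x, in_In I x -> f x = sym_lovasz f (fun i => phi (x i)).
Proof.
case=> Hm [phi [Hnd [Hod Hh]]].
have Hr := rep Hm Hnd Hod Hh.
exists phi; split; first done; split; first done; split; last exact: Hr.
case: (classic (exists A, shift0 f (ind R A) <> 0)) => [[A HA]|Hn].
  have := Hh 1 A I1; rewrite one_ind => E.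
  have HA' : shift0 f (ind R A) != 0 by apply/eqP.
  by apply: (mulIf HA'); rewrite /= mul1r -E.
exfalso.
have Hall : forall B, f (ind R B) = f (@zerov R n).
  move=> B; apply/eqP; rewrite -subr_eq0; apply/eqP; apply: NNPP => hB.
  by apply: Hn; exists B.
case: Hne => x [y [Ix [Iy Hxy]]]; apply: Hxy.
by rewrite (Hr x Ix) (Hr y Iy) !sym_const.
Qed.

End Main.
Unset Implicit Arguments.

Theorem theorem18 (R : realFieldType) (n : nat) (I : R -> Prop)
  (f : ('I_n -> R) -> R)
  (HI : is_interval I) (HIc : centered0 I) (HI1 : contains_m11 I)
  (Hnc : nonconst_on (fun x => I x /\ 0 <= x) f \/
         nonconst_on (fun x => I x /\ x <= 0) f) :
  ((sym_quasi_lovasz I f /\ exists A : {set 'I_n}, shift0 f (ind R A) <> 0)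
     <-> (comono_modular I f /\ oddly_homogeneous I (shift0 f)))
  /\
  ((comono_modular I f /\ oddly_homogeneous I (shift0 f))
     <-> (exists phi : R -> R, nondecr_on I phi /\ odd_on I phi /\ phi 1 = 1 /\
           forall x, in_In I x -> f x = sym_lovasz f (fun i => phi (x i)))).
Proof.
have Hne : exists x y, in_In I x /\ in_In I y /\ f x <> f y.
  case: Hnc => [[x [y [Hx [Hy H]]]]|[x [y [Hx [Hy H]]]]]; exists x, y;
    (split; [move=> i; exact: (Hx i).1 | split; [move=> i; exact: (Hy i).1|exact: H]]).
split; split.
- exact: I2 HI1.
- move=> H; exact: I31 Hne (I3 HIc HI1 Hne H).
- exact: I3 HIc HI1 Hne.
- move=> H; exact: I2 HI1 (I31 Hne H).
Qed.
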